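(* Let $\lambda$ be a partition with at most $n$ positive parts, and let $n'\geq n$. If the poset $\mathcal B_\lambda^n$ is not a lattice, then the poset $\mathcal B_\lambda^{n'}$ is not a lattice.
   Context: For $N\geq 1$ and a partition $\nu$ with at most $N$ positive parts, $\mathcal B_\nu^N$ is the set of semistandard Young tableaux of shape $\nu$ (rows weakly increasing, columns strictly increasing) with entries in $\{1,\ldots,N+1\}$, partially ordered by the reflexive transitive closure of $T<F_i(T)$ for $i\in\{1,\ldots,N\}$ with $F_i(T)\neq 0$. Here $F_i$ is the type A crystal lowering operator: in the reading word of $T$ (rows read from bottom to top, each row left to right) keep only letters $i$ and $i+1$, replace each $i$ by '')'' and each $i+1$ by ''('', and match parentheses in the usual way; if there is no unmatched '')'', $F_i(T)=0$; otherwise $F_i(T)$ is obtained by changing the entry $i$ corresponding to the rightmost unmatched '')'' into $i+1$. *)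

(* Defs.v *)
From mathcomp Require Import all_boot.
From Stdlib Require Import Relations.

Set Implicit Arguments.
Unset Strict Implicit.
Unset Printing Implicit Defensive.

(* A partition: a weakly decreasing sequence of positive integers
   (its length is its number of positive parts). *)
Definition is_partition (nu : seq nat) : bool :=
  sorted geq nu && all (fun k => 0 < k) nu.

(* A tableau is given by its rows, top row first. *)
Definition tableau := seq (seq nat).

Definition is_ssyt (N : nat) (nu : seq nat) (T : tableau) : bool :=
  [&& map size T == nu,
      all (fun r => sorted leq r) T,
      all (fun r => all (fun a => (1 <= a) && (a <= N.+1)) r) T &
      all (fun k => all (fun c => nth 0 (nth [::] T k) c < nth 0 (nth [::] T k.+1) c)
                        (iota 0 (size (nth [::] T k.+1))))
          (iota 0 (size T))].

Definition B (N : nat) (nu : seq nat) (T : tableau) : Prop := is_ssyt N nu T.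

Definition reading_word (T : tableau) : seq nat := flatten (rev T).

(* Position (in the word) of the rightmost unmatched ")" (= letter i),
   where each i.+1 is "(" and each i is ")"; "open" counts the currently
   unmatched "(" to the left. *)
Fixpoint rightmost_unmatched (i : nat) (w : seq nat) (open pos : nat)
    (last : option nat) : option nat :=
  match w with
  | [::] => last
  | a :: w' =>
      if a == i.+1 then rightmost_unmatched i w' open.+1 pos.+1 last
      else if a == i then
        (if 0 < open then rightmost_unmatched i w' open.-1 pos.+1 last
         else rightmost_unmatched i w' open pos.+1 (Some pos))
      else rightmost_unmatched i w' open pos.+1 last
  end.

(* Crystal lowering operator F_i; None plays the role of 0. *)
Definition F (i : nat) (T : tableau) : option tableau :=
  let w := reading_word T in
  match rightmost_unmatched i w 0 0 None with
  | None => None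
  | Some p =>
      Some (rev (reshape (map size (rev T)) (set_nth 0 w p i.+1)))
  end.

Definition crystal_step (N : nat) (T T' : tableau) : Prop :=
  exists i, 1 <= i <= N /\ F i T = Some T'.

Definition crystal_le (N : nat) : relation tableau :=
  clos_refl_trans tableau (crystal_step N).

Definition is_join N nu (x y z : tableau) : Prop :=
  B N nu z /\ crystal_le N x z /\ crystal_le N y z /\
  forall w, B N nu w -> crystal_le N x w -> crystal_le N y w -> crystal_le N z w.

Definition is_meet N nu (x y z : tableau) : Prop :=
  B N nu z /\ crystal_le N z x /\ crystal_le N z y /\
  forall w, B N nu w -> crystal_le N w x -> crystal_le N w y -> crystal_le N w z.

Definition is_lattice (N : nat) (nu : seq nat) : Prop :=
  forall x y, B N nu x -> B N nu y ->
    (exists z, is_join N nu x y z) /\ (exists z, is_meet N nu x y z).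

(* Main.v *)
From Stdlib Require Import Relations.
Require Import Defs.
From mathcomp Require Import all_boot zify.
Set Implicit Arguments.
Unset Strict Implicit.

Definition shift k (T : tableau) : tableau := map (map (addn k)) T.
Definition bnd m T := all (fun a => a <= m) (reading_word T).
Definition lbnd l T := all (fun a => l <= a) (reading_word T).

Lemma ru_spec i w : forall o pos last p, rightmost_unmatched i w o pos last = Some p ->
  last = Some p \/ [/\ pos <= p, p - pos < size w & nth 0 w (p - pos) = i].
Proof.
elim: w => [|a w IH] o pos last p /=; first by left.
have step : forall o' l', rightmost_unmatched i w o' pos.+1 l' = Some p -> l' = last ->
   last = Some p \/ [/\ pos <= p, p - pos < (size w).+1 & nth 0 (a :: w) (p - pos) = i].
  move=> o' l' H El; subst l'; case: (IH _ _ _ _ H) => [->|[h1 h2 h3]]; first by left.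
  right; have e: p - pos = (p - pos.+1).+1 by lia.
  rewrite e /=; split => //; lia.
case: eqP => [_|_]; first by move/step; apply.
case: eqP => [ai|_]; last by move/step; apply.
case: ifP => _; first by move/step; apply.
move/IH => [[<-]|[h1 h2 h3]]; first by right; rewrite subnn /=; split.
right; have e: p - pos = (p - pos.+1).+1 by lia.
rewrite e /=; split => //; lia.
Qed.

Lemma F_spec i T T' : F i T = Some T' -> exists p,
  [/\ p < size (reading_word T), nth 0 (reading_word T) p = i &
      T' = rev (reshape (map size (rev T)) (set_nth 0 (reading_word T) p i.+1))].
Proof.
rewrite /F. case E: rightmost_unmatched => [p|] // [<-].
case: (ru_spec E) => // [[_ h1 h2]]. exists p; rewrite subn0 in h1 h2; by split.
Qed.

Lemma F_word i T T' : F i T = Some T' -> exists p,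
  [/\ p < size (reading_word T), nth 0 (reading_word T) p = i &
      reading_word T' = set_nth 0 (reading_word T) p i.+1].
Proof.
case/F_spec => p [h1 h2 ->]; exists p; split => //.
rewrite {1}/reading_word revK reshapeKr // size_set_nth size_flatten /shape.
rewrite /reading_word size_flatten /shape in h1; lia.
Qed.

Lemma step_down i T T' m : F i T = Some T' -> bnd m T' -> bnd m T /\ i.+1 <= m.
Proof.
case/F_word => p [hp hi e]; rewrite /bnd e => hb.
have /(all_nthP 0) hb' := hb.
have hi1 : i.+1 <= m.
  have := hb' p; rewrite size_set_nth nth_set_nth /= eqxx; apply; lia.
split => //; apply/(all_nthP 0) => q hq.
have := hb' q; rewrite size_set_nth nth_set_nth /=.
case: eqP => [->|_] h; first by rewrite hi; lia.
apply: h; lia.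
Qed.

Lemma step_up i T T' l : F i T = Some T' -> lbnd l T -> lbnd l T' /\ l <= i.
Proof.
case/F_word => p [hp hi e]; rewrite /lbnd e => hb.
have /(all_nthP 0) hb' := hb.
have li : l <= i by rewrite -hi; apply: hb'.
split => //; apply/(all_nthP 0) => q; rewrite size_set_nth nth_set_nth /=.
case: eqP => [_|_] hq; first lia.
apply: hb'; lia.
Qed.

Lemma down_closed N a b m : crystal_le N a b -> bnd m b -> bnd m a.
Proof.
elim => [x y [i [_ hF]]|x|x y z _ IH1 _ IH2].
- by move=> hb; case: (step_down hF hb).
- done.
- by move=> hz; apply: IH1; apply: IH2.
Qed.

Lemma restrictN N N' a b : crystal_le N' a b -> bnd N.+1 b -> crystal_le N a b.
Proof.
elim => [x y [i [hi hF]]|x|x y z H1 IH1 H2 IH2] hb.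
- apply: rt_step; exists i; split => //.
  case: (step_down hF hb) => _ h; lia.
- exact: rt_refl.
- apply: rt_trans (IH1 _) (IH2 hb); exact: down_closed H2 hb.
Qed.

Lemma mono N N' a b : N <= N' -> crystal_le N a b -> crystal_le N' a b.
Proof.
move=> hN; elim => [x y [i [hi hF]]|x|x y z _ IH1 _ IH2].
- apply: rt_step; exists i; split => //; lia.
- exact: rt_refl.
- exact: rt_trans IH1 IH2.
Qed.

Lemma rw_shift k T : reading_word (shift k T) = map (addn k) (reading_word T).
Proof. by rewrite /reading_word /shift map_flatten map_rev. Qed.

Lemma ru_shift k j w : forall o pos l,
  rightmost_unmatched (k + j) (map (addn k) w) o pos l = rightmost_unmatched j w o pos l.
Proof.
elim: w => [|a w IH] o pos l //=.
by rewrite -addnS !eqn_add2l !IH.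
Qed.

Lemma set_nth_map (f : nat -> nat) s p y : p < size s ->
  set_nth 0 (map f s) p (f y) = map f (set_nth 0 s p y).
Proof. by elim: s p => [|a s IH] [|p] //= h; rewrite IH. Qed.

Lemma reshape_map (f : nat -> nat) sh s :
  reshape sh (map f s) = map (map f) (reshape sh s).
Proof. by elim: sh s => //= n sh IH s; rewrite -map_drop IH map_take. Qed.

Lemma shape_shift k T : map size (rev (shift k T)) = map size (rev T).
Proof.
rewrite /shift -map_rev -map_comp; apply: eq_map => r /=; exact: size_map.
Qed.

Lemma F_shift k j T : F (k + j) (shift k T) = omap (shift k) (F j T).
Proof.
rewrite /F rw_shift ru_shift.
case E: rightmost_unmatched => [p|] //=.
case: (ru_spec E) => // [[_ h1 _]]; rewrite subn0 in h1.
by rewrite shape_shift -addnS set_nth_map // reshape_map /shift -map_rev.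
Qed.

Lemma shift_inj k : injective (shift k).
Proof. by apply: inj_map; apply: inj_map; apply: addnI. Qed.

Lemma lbnd_shift k x : lbnd 1 x -> lbnd k.+1 (shift k x).
Proof.
rewrite /lbnd rw_shift all_map => h; apply: sub_all h => a /=; rewrite /preim /=; lia.
Qed.

Lemma up_closed N k x c : crystal_le (k + N) (shift k x) c -> lbnd 1 x ->
  exists y, [/\ c = shift k y, crystal_le N x y & lbnd 1 y].
Proof.
move=> H; apply clos_rt_rt1n in H.
remember (shift k x) as a eqn:Ea'.
move: x Ea'.
induction H as [a|a b c Hab Hbc IH] => x0 Ea Hx.
- by exists x0; split => //; apply: rt_refl.
- case: Hab => i [hi hF]; subst a.
  have [_ hki] := step_up hF (lbnd_shift k Hx).
  have ei : i = k + (i - k) by lia.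
  move: hF; rewrite ei F_shift.
  case E: (F (i - k) x0) => [x'|] //= [eb].
  have [hx' _] := step_up E Hx.
  have [y [ec hxy hy]] := IH x' (esym eb) hx'.
  exists y; split => //; apply: rt_trans hxy; apply: rt_step.
  exists (i - k); split => //; lia.
Qed.

Lemma shift_lift N k x y : crystal_le N x y -> crystal_le (k + N) (shift k x) (shift k y).
Proof.
elim => [a b [i [hi hF]]|a|a b c _ IH1 _ IH2].
- apply: rt_step; exists (k + i); split; first lia.
  by rewrite F_shift hF.
- exact: rt_refl.
- exact: rt_trans IH1 IH2.
Qed.

Lemma all_rw (P : pred nat) T : all P (reading_word T) = all (fun r => all P r) T.
Proof.
rewrite /reading_word; elim: T => //= r T IH.
by rewrite rev_cons flatten_rcons all_cat IH andbC.
Qed.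

Lemma nth_shift k T r : nth [::] (shift k T) r = map (addn k) (nth [::] T r).
Proof.
case: (ltnP r (size T)) => h; first by rewrite (nth_map [::]).
by rewrite !nth_default ?size_map.
Qed.

Lemma col_shift k r0 r1 c : c < size r1 -> 0 < nth 0 r1 c ->
  (nth 0 (map (addn k) r0) c < nth 0 (map (addn k) r1) c) = (nth 0 r0 c < nth 0 r1 c).
Proof.
move=> h1 hp; rewrite (nth_map 0 _ _ h1); case: (ltnP c (size r0)) => h0.
  by rewrite (nth_map 0 _ _ h0) ltn_add2l.
have h0' : size (map (addn k) r0) <= c by rewrite size_map.
rewrite (nth_default 0 h0) (nth_default 0 h0'); apply/idP/idP => ?; lia.
Qed.

Lemma ssyt_shift N k nu T : lbnd 1 T ->
  is_ssyt (k + N) nu (shift k T) = is_ssyt N nu T.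
Proof.
move=> hl; rewrite /is_ssyt.
have -> : map size (shift k T) = map size T.
  rewrite /shift -map_comp; apply: eq_map => r /=; exact: size_map.
have -> : all (fun r => sorted leq r) (shift k T) = all (fun r => sorted leq r) T.
  rewrite /shift all_map; apply: eq_all => r /=; rewrite sorted_map.
  by apply/idP/idP; apply: sub_sorted => a b /=; rewrite leq_add2l.
have -> : all (fun r => all (fun a => (1 <= a) && (a <= (k + N).+1)) r) (shift k T)
        = all (fun r => all (fun a => (1 <= a) && (a <= N.+1)) r) T.
  rewrite -!all_rw rw_shift all_map; apply: eq_in_all => a ha.
  have := allP hl a ha; rewrite /preim /= => h.
  apply/idP/idP => /andP[? ?]; apply/andP; split; lia.
congr [&& _, _, _ & _].
rewrite size_map; apply: eq_all => kk; rewrite !nth_shift size_map.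
apply: eq_in_all => c; rewrite mem_iota add0n => /andP[_ hc]; apply: col_shift => //.
move: hl; rewrite /lbnd all_rw => hl.
case: (ltnP kk.+1 (size T)) => hk; last by move: hc; rewrite nth_default.
have := allP hl _ (mem_nth [::] hk) => /allP; apply; exact: mem_nth.
Qed.

Lemma B_lbnd N nu T : B N nu T -> lbnd 1 T.
Proof.
case/and4P => _ _ h _; rewrite /lbnd all_rw; apply: sub_all h => r /=.
by apply: sub_all => a /andP[].
Qed.

Lemma B_bnd N nu T : B N nu T -> bnd N.+1 T.
Proof.
case/and4P => _ _ h _; rewrite /bnd all_rw; apply: sub_all h => r /=.
by apply: sub_all => a /andP[].
Qed.

Lemma B_restrict N N' nu T : B N' nu T -> bnd N.+1 T -> B N nu T.
Proof.
case/and4P => h1 h2 h3 h4 hb; apply/and4P; split => //.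
rewrite -all_rw in h3; rewrite -(all_rw (fun a => (1 <= a) && (a <= N.+1))); apply/allP => a ha.
by have := allP h3 a ha; have := allP hb a ha => /= ? /andP[? ?]; apply/andP.
Qed.

Lemma B_weaken N N' nu T : N <= N' -> B N nu T -> B N' nu T.
Proof.
move=> hN; case/and4P => h1 h2 h3 h4; apply/and4P; split => //.
rewrite -all_rw in h3; rewrite -(all_rw (fun a => (1 <= a) && (a <= N'.+1))); apply: sub_all h3 => a /= /andP[? ?]; apply/andP; split => //; lia.
Qed.

Unset Implicit Arguments.
Theorem lemma5p3 (lam : seq nat) (n n' : nat) :
  1 <= n -> is_partition lam -> size lam <= n -> n <= n' ->
  ~ is_lattice n lam -> ~ is_lattice n' lam.
Proof.
move=> _ _ _ hnn' hnot hlat; apply: hnot => x y Bx By.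
set k := n' - n.
have e : n' = k + n by rewrite /k subnK.
have hlat' : is_lattice (k + n) lam by rewrite -e.
have Bsh : forall u, B n lam u -> B (k + n) lam (shift k u).
  by move=> u hu; rewrite /B ssyt_shift //; exact: B_lbnd hu.
split.
- have [[z [Bz [hxz [hyz hmin]]]] _] := hlat' _ _ (Bsh _ Bx) (Bsh _ By).
  have [w [ez hxw lw]] := up_closed hxz (B_lbnd Bx).
  have [w' [ez' hyw' _]] := up_closed hyz (B_lbnd By).
  have ew : w' = w by apply: (@shift_inj k); rewrite -ez' -ez.
  subst z w'.
  exists w; split; first by rewrite /B -(ssyt_shift n k) //.
  split => //; split => // u Bu hxu hyu.
  have := hmin (shift k u) (Bsh _ Bu) (shift_lift k hxu) (shift_lift k hyu).
  case/up_closed => // v [ev hwv _].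
  by rewrite (shift_inj ev).
- have [_ [z [Bz [hzx [hzy hmax]]]]] := hlat x y (B_weaken hnn' Bx) (B_weaken hnn' By).
  have bz : bnd n.+1 z := down_closed hzx (B_bnd Bx).
  exists z; split; first exact: B_restrict Bz bz.
  split; first exact: (@restrictN n _ _ _ hzx (B_bnd Bx)).
  split; first exact: (@restrictN n _ _ _ hzy (B_bnd By)).
  move=> w Bw hwx hwy.
  exact: (@restrictN n _ _ _ (hmax w (B_weaken hnn' Bw) (mono hnn' hwx) (mono hnn' hwy)) bz).
Qed.
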